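(* Let $N^h\ge 2$ be an integer and $h=1/N^h$. Let $\lambda_j=j^2\pi^2$ be the $j$-th exact eigenvalue of $-u''=\lambda u$ on $(0,1)$ with $u(0)=u(1)=0$, and let $\lambda^h_{gsq,j}$ be the $j$-th approximate eigenvalue (eigenvalues sorted in nondecreasing order, counting multiplicity) of the linear GSFEMBQ generalized matrix eigenvalue problem $(\mathbf{K}-\eta_K\mathbf{S})\mathbf{U}=\lambda^h(\alpha\mathbf{M}_G+(1-\alpha)\mathbf{M}_L+\eta_M\mathbf{S}_g)\mathbf{U}$ described in the context, with $\eta_K=\frac{31}{252}$, $\eta_M=\frac{23}{3780}$ and $\alpha=\frac{26}{21}$. Then \[ \frac{|\lambda^h_{gsq,j}-\lambda_j|}{\lambda_j}<\frac{1}{30240}(j\pi h)^8\qquad\text{for all } j\in\{1,\dots,N^h-1\}. \]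
   Context: Setting (linear finite elements, generalized SoftFEM with blended quadrature, in 1D): Let $x_k=kh$, $k=0,\dots,N^h$, be a uniform mesh of $[0,1]$. Let $V^h$ be the space of continuous functions on $[0,1]$ that are affine on each $[x_{k-1},x_k]$ and vanish at $0$ and $1$, with hat basis $\phi_k$, $k=1,\dots,N^h-1$, $\phi_k(x_l)=\delta_{kl}$. For $v\in V^h$ and an interior node $x_k$ let $[\![v']\!](x_k)=v'(x_k^-)-v'(x_k^+)$. Define $a(v,w)=\int_0^1 v'w'\,dx$, $s(v,w)=\sum_{k=1}^{N^h-1} h\,[\![v']\!](x_k)[\![w']\!](x_k)$, $s_g(v,w)=\sum_{k=1}^{N^h-1} h^3\,[\![v']\!](x_k)[\![w']\!](x_k)$, $\mathbf{K}_{kl}=a(\phi_l,\phi_k)$, $\mathbf{S}_{kl}=s(\phi_l,\phi_k)$, $(\mathbf{S}_g)_{kl}=s_g(\phi_l,\phi_k)$. $\mathbf{M}_G$ is the mass matrix $\int_0^1\phi_l\phi_k\,dx$ computed elementwise by the 2-point Gauss–Legendre rule, and $\mathbf{M}_L$ the one computed by the 2-point Gauss–Lobatto (trapezoidal) rule. Explicitly, $\mathbf{K}=\frac1h\,\mathrm{tridiag}(-1,2,-1)$, $\mathbf{M}_G=h\,\mathrm{tridiag}(\tfrac16,\tfrac23,\tfrac16)$, $\mathbf{M}_L=h\,\mathbf{I}$, $\mathbf{S}=\frac1h$ times the symmetric pentadiagonal matrix with rows $(1,-4,6,-4,1)$ except that the first and last diagonal entries are $5$, and $\mathbf{S}_g=h^2\mathbf{S}$;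 all are $(N^h-1)\times(N^h-1)$. *)

(* Defs.v *)
From HB Require Import structures.
From mathcomp Require Import all_boot all_order all_algebra.
From mathcomp Require Import reals trigo.
Set Implicit Arguments. Unset Strict Implicit. Unset Printing Implicit Defensive.
Import Order.TTheory GRing.Theory Num.Theory.
Local Open Scope ring_scope.

Section GSFEM.
Variable R : realType.

(* Matrix index i : 'I_n with n = N^h - 1 corresponds to the interior node
   x_k with k = i+1.  Mesh size h = 1/N^h. *)

Definition tridiag (n : nat) (o d : R) : 'M[R]_n :=
  \matrix_(i, j) (if i == j then d
                  else if (i.+1 == j :> nat) || (j.+1 == i :> nat) then o else 0).

(* slope of the hat function phi_k on element [x_(e-1), x_e], e = 1..N *)
Definition dphi (h : R) (k e : nat) : R :=
  if e == k then h^-1 else if e == k.+1 then - h^-1 else 0.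

(* jump [[phi_k']](x_m) = phi_k'(x_m^-) - phi_k'(x_m^+) *)
Definition jump (h : R) (k m : nat) : R := dphi h k m - dphi h k m.+1.

Definition Kmat (n : nat) (h : R) : 'M[R]_n := h^-1 *: tridiag n (-1) 2.
Definition MGmat (n : nat) (h : R) : 'M[R]_n := h *: tridiag n (1/6) (2/3).
Definition MLmat (n : nat) (h : R) : 'M[R]_n := h *: 1%:M.

(* S_kl = s(phi_l, phi_k) = sum_{m=1}^{N-1} h [[phi_l']](x_m) [[phi_k']](x_m) *)
Definition Smat (n : nat) (h : R) : 'M[R]_n :=
  \matrix_(i, j) \sum_(m < n) h * jump h j.+1 m.+1 * jump h i.+1 m.+1.
Definition Sgmat (n : nat) (h : R) : 'M[R]_n :=
  \matrix_(i, j) \sum_(m < n) h ^+ 3 * jump h j.+1 m.+1 * jump h i.+1 m.+1.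

Definition gen_eigs (n : nat) (A B : 'M[R]_n) (lam : 'I_n -> R) : Prop :=
  (forall i j : 'I_n, (i <= j)%N -> lam i <= lam j) /\
  (forall x : R, \det (A - x *: B) = \det B * \prod_(i < n) (lam i - x)).

Definition gsq_A (n : nat) (h etaK : R) : 'M[R]_n := Kmat n h - etaK *: Smat n h.
Definition gsq_B (n : nat) (h etaM alpha : R) : 'M[R]_n :=
  alpha *: MGmat n h + (1 - alpha) *: MLmat n h + etaM *: Sgmat n h.

End GSFEM.

(* Main.v *)
Require Import Defs.
From HB Require Import structures.
From mathcomp Require Import all_boot all_order all_algebra.
From mathcomp Require Import reals trigo.
From mathcomp Require Import classical_sets topology normedtype sequences interval.
From mathcomp Require Import ring lra zify.
Import Order.TTheory GRing.Theory Num.Theory.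
Import numFieldNormedType.Exports.
Local Open Scope ring_scope.

Ltac pos := match goal with
 | |- is_true (0 < _ * _) => apply: mulr_gt0; pos
 | |- is_true (0 < _ + _) => apply: addr_gt0; pos
 | |- is_true (0 < _^-1) => rewrite invr_gt0; pos
 | |- is_true (0 < _ ^+ _) => apply: exprn_gt0; pos
 | |- is_true (0 < 1) => exact: ltr01
 | |- is_true (0 < _) => rewrite ltr0n
 end.
Ltac nneg := match goal with
 | |- is_true (0 <= _ * _) => apply: mulr_ge0; nneg
 | |- is_true (0 <= 1 - _) => lra
 | |- is_true (0 <= _ + _) => apply: addr_ge0; nneg
 | |- is_true (0 <= _^-1) => rewrite invr_ge0; nneg
 | |- is_true (0 <= _ ^+ _) => apply: exprn_ge0; nneg
 | |- is_true (0 <= _) => first [ exact: ler0n | lra ]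
 end.

Section S.
Variable R : realType.
Definition Pl (y : R) := 1 - y/2 + y^+2/24 - y^+3/720 + y^+4/((40*1000+320)) - y^+5/((3*1000+628)*1000+800).
Definition Pu (y : R) := Pl y + y^+6/((479*1000+1)*1000+600).
Lemma pair_lt (x : R) k : 0 < x -> x^+2 < 30 -> (2 <= k)%N ->
  x ^+ (k.+1).*2 / ((k.+1).*2)`!%:R < x ^+ k.*2 / (k.*2)`!%:R.
Proof.
move=> x0 x30 k2.
have X0 : 0 < x ^+ k.*2 by rewrite exprn_gt0.
have F0 : 0 < (k.*2)`!%:R :> R by rewrite ltr0n fact_gt0.
have ab : 30 <= (k.*2.+2)%:R * (k.*2.+1)%:R :> R.
  rewrite -natrM ler_nat. 
  have : (6 <= k.*2.+2)%N by rewrite -addnn; lia.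
  have : (5 <= k.*2.+1)%N by rewrite -addnn; lia.
  move=> h1 h2; exact: (leq_mul h2 h1).
have -> : x ^+ (k.+1).*2 / ((k.+1).*2)`!%:R =
   (x ^+ k.*2 / (k.*2)`!%:R) * (x^+2 / ((k.*2.+2)%:R * (k.*2.+1)%:R)).
  rewrite doubleS factS factS !natrM exprSr exprSr.
  field. have k0 : 0 <= (k.*2)%:R :> R := ler0n _ _.
  by apply/and3P; split; apply: lt0r_neq0 => //; lra.
rewrite gtr_pMr ?divr_gt0 // ltr_pdivrMr ?mul1r; first lra.
by rewrite mulr_gt0 // ltr0n.
Qed.

Lemma coef_pair (x : R) k :
  cos_coeff' x k + cos_coeff' x k.+1 =
  (-1) ^+ k * (x ^+ k.*2 / (k.*2)`!%:R - x ^+ (k.+1).*2 / ((k.+1).*2)`!%:R).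
Proof. by rewrite /cos_coeff' -!exprnP exprS; ring. Qed.

Lemma natr_factS n : (n.+1)`!%:R = n.+1%:R * n`!%:R :> R.
Proof. by rewrite factS natrM. Qed.

Lemma cosc'E (x : R) i : cos_coeff' x i = (-1)^+i * (x^+2)^+i / (i.*2)`!%:R.
Proof. by rewrite /cos_coeff' -exprM mul2n. Qed.

Fixpoint rfact (k : nat) : R := if k is k'.+1 then k%:R * rfact k' else 1.
Lemma fact_eq k : (k`!)%:R = rfact k.
Proof. by elim: k => [|k IH] //=; rewrite factS natrM IH. Qed.

Lemma sumPl (x : R) : \sum_(0 <= i < 6) cos_coeff' x i = Pl (x ^+ 2).
Proof.
rewrite big_mkord; under eq_bigr do rewrite cosc'E fact_eq.
rewrite !big_ord_recr big_ord0 /= /Pl.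
rewrite !doubleS double0; by field.
Qed.

Lemma sumPu (x : R) : \sum_(0 <= i < 7) cos_coeff' x i = Pu (x ^+ 2).
Proof.
rewrite big_mkord; under eq_bigr do rewrite cosc'E fact_eq.
rewrite !big_ord_recr big_ord0 /= /Pu /Pl !doubleS double0.
by field.
Qed.

Lemma cos_lb (x : R) : 0 < x -> x^+2 < 30 -> Pl (x^+2) < cos x.
Proof.
move=> x0 x30.
have h := @cvg_cos_coeff' R x.
rewrite -(cvg_lim (@Rhausdorff R) h) -sumPl.
apply: lt_sum_lim_series; first by move/cvgP: h.
move=> d; rewrite addnS coef_pair -signr_odd oddD odd_double /= expr0 mul1r subr_gt0.
by apply: pair_lt => //; lia.
Qed.

Lemma cos_ub (x : R) : 0 < x -> x^+2 < 30 -> cos x < Pu (x^+2).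
Proof.
move=> x0 x30.
have /cvgN h := @cvg_cos_coeff' R x.
rewrite -ltrN2 -(cvg_lim (@Rhausdorff R) h) -sumPu -sumrN -seriesN.
apply: lt_sum_lim_series; first by move/cvgP: h; rewrite seriesN.
move=> d; rewrite addnS -opprD coef_pair -signr_odd oddD odd_double /= expr1 mulN1r opprK subr_gt0.
by apply: pair_lt => //; lia.
Qed.

End S.
Arguments Pl {R} y. Arguments Pu {R} y.

Section S. Variable R : realType.
Lemma pi_lt : pi < 16/5 :> R.
Proof.
have c : cos (8/5 : R) < 0.
  have h1 : 0 < (8/5 : R) by lra.
  have h2 : (8/5 : R)^+2 < 30 by rewrite expr2; lra.
  have h3 := @cos_ub R (8/5) h1 h2.
  have : Pu ((8/5 : R)^+2) = - ((((476 * 1000 + 381) * 1000 + 233) * 1000 + 223) / ((((16 * 1000 + 314) * 1000 + 697) * 1000 + 265) * 1000 + 625)).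
  Time rewrite /Pu /Pl; field.
  done.
  move=> e; rewrite e in h3; apply: lt_trans h3 _; rewrite oppr_lt0.
  by pos.
rewrite ltNge; apply/negP => hp.
have : 0 <= cos (8/5 : R).
  apply: cos_ge0_pihalf; apply/andP; split; lra.
lra.
Qed.
End S.

Section S.
Variable R : realType.
Definition Nf (m : R) := m - 31/252 * m^+2.
Definition Df (m : R) := 1 - 13/63 * m + 23/3780 * m^+2.
Definition G (m l : R) := 1 - 31/252 * (m + l) + (31/252 * (13/63) - 23/3780) * m * l.
Definition QL (s : R) : R := (157 / ((9 * 1000 + 525) * 1000 + 600)) * s ^+ 0 * (1 - s) ^+ 12 + ((280 * 1000 + 31) / (((1 * 1000 + 964) * 1000 + 655) * 1000)) * s ^+ 1 * (1 - s) ^+ 11 + (((272 * 1000 + 426) * 1000 + 177) / (((491 * 1000 + 163) * 1000 + 750) * 1000)) * s ^+ 2 * (1 - s) ^+ 10 + (((554 * 1000 + 983) * 1000 + 603) / (((434 * 1000 + 109) * 1000 + 375) * 1000)) * s ^+ 3 * (1 - s) ^+ 9 + (((((102 * 1000 + 177) * 1000 + 910) * 1000 + 104) * 1000 + 301) / (((((52 * 1000 + 744) * 1000 + 289) * 1000 + 62) * 1000 + 500) * 1000)) * s ^+ 4 * (1 - s) ^+ 8 + ((((((11 * 1000 + 77) * 1000 + 965) * 1000 + 146) * 1000 + 681) * 1000 + 537) / ((((((5 * 1000 + 439) * 1000 + 254) * 1000 + 809) * 1000 + 570) * 1000 + 312) * 1000 + 500)) * s ^+ 5 * (1 - s) ^+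 7 + ((((((100 * 1000 + 464) * 1000 + 397) * 1000 + 433) * 1000 + 511) * 1000 + 317) / ((((((64 * 1000 + 753) * 1000 + 33) * 1000 + 447) * 1000 + 265) * 1000 + 625) * 1000)) * s ^+ 6 * (1 - s) ^+ 6 + (((((((513 * 1000 + 265) * 1000 + 292) * 1000 + 631) * 1000 + 164) * 1000 + 518) * 1000 + 37) / (((((((560 * 1000 + 923) * 1000 + 152) * 1000 + 236) * 1000 + 938) * 1000 + 476) * 1000 + 562) * 1000 + 500)) * s ^+ 7 * (1 - s) ^+ 5 + (((((((((3 * 1000 + 280) * 1000 + 49) * 1000 + 290) * 1000 + 22) * 1000 + 282) * 1000 + 364) * 1000 + 5) * 1000 + 759) / (((((((((7 * 1000 + 67) * 1000 + 631) * 1000 + 718) * 1000 + 185) * 1000 + 424) * 1000 + 804) * 1000 + 687) * 1000 + 500) * 1000)) * s ^+ 8 * (1 - s) ^+ 4 + (((((((((3 * 1000 + 162) * 1000 + 874) * 1000 + 774) * 1000 + 361) * 1000 + 104) * 1000 + 616) * 1000 + 327) * 1000 + 333) / (((((((((14 * 1000 + 724) * 1000 + 232) * 1000 + 746) * 1000 + 219) * 1000 + 635) * 1000 + 9) * 1000 + 765) * 1000 + 625) * 1000)) * s ^+ 9 * (1 - s) ^+ 3 + ((((((((((2 * 1000 + 694) * 1000 + 342) * 1000 + 242) * 1000 + 23) * 1000 + 851) * 1000 + 660) * 1000 + 623) * 1000 + 728) * 1000 + 399) / ((((((((((33 * 1000 + 129) * 1000 + 523) * 1000 + 678) * 1000 +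 994) * 1000 + 178) * 1000 + 771) * 1000 + 972) * 1000 + 656) * 1000 + 250) * 1000)) * s ^+ 10 * (1 - s) ^+ 2 + ((((((((((24 * 1000 + 935) * 1000 + 919) * 1000 + 88) * 1000 + 812) * 1000 + 503) * 1000 + 799) * 1000 + 739) * 1000 + 753) * 1000 + 39) / (((((((((((1 * 1000 + 242) * 1000 + 357) * 1000 + 137) * 1000 + 962) * 1000 + 281) * 1000 + 703) * 1000 + 948) * 1000 + 974) * 1000 + 609) * 1000 + 375) * 1000)) * s ^+ 11 * (1 - s) ^+ 1 + ((((((((((846 * 1000 + 195) * 1000 + 20) * 1000 + 495) * 1000 + 79) * 1000 + 364) * 1000 + 555) * 1000 + 304) * 1000 + 203) * 1000 + 703) / (((((((((((372 * 1000 + 707) * 1000 + 141) * 1000 + 388) * 1000 + 684) * 1000 + 511) * 1000 + 184) * 1000 + 692) * 1000 + 382) * 1000 + 812) * 1000 + 500) * 1000)) * s ^+ 12 * (1 - s) ^+ 0.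
Definition QU (s : R) : R := (473 / ((9 * 1000 + 525) * 1000 + 600)) * s ^+ 0 * (1 - s) ^+ 10 + (841 / ((2 * 1000 + 41) * 1000 + 200)) * s ^+ 1 * (1 - s) ^+ 9 + (((418 * 1000 + 68) * 1000 + 193) / (((267 * 1000 + 907) * 1000 + 500) * 1000)) * s ^+ 2 * (1 - s) ^+ 8 + ((((20 * 1000 + 817) * 1000 + 307) * 1000 + 549) / ((((5 * 1000 + 860) * 1000 + 476) * 1000 + 562) * 1000 + 500)) * s ^+ 3 * (1 - s) ^+ 7 + (((((141 * 1000 + 994) * 1000 + 399) * 1000 + 975) * 1000 + 327) / (((((26 * 1000 + 372) * 1000 + 144) * 1000 + 531) * 1000 + 250) * 1000)) * s ^+ 4 * (1 - s) ^+ 6 + ((((((1 * 1000 + 124) * 1000 + 340) * 1000 + 324) * 1000 + 467) * 1000 + 167) / (((((197 * 1000 + 791) * 1000 + 83) * 1000 + 984) * 1000 + 375) * 1000)) * s ^+ 5 * (1 - s) ^+ 5 + ((((((449 * 1000 + 178) * 1000 + 350) * 1000 + 857) * 1000 + 893) * 1000 + 269) / ((((((105 * 1000 + 959) * 1000 + 509) * 1000 + 277) * 1000 + 343) * 1000 + 750) * 1000)) * s ^+ 6 * (1 - s) ^+ 4 + ((((((682 * 1000 + 379) * 1000 + 638) * 1000 + 915) * 1000) * 1000 + 843) / ((((((309 * 1000 + 48) * 1000 + 568) * 1000 + 725) * 1000 + 585) * 1000 + 937) * 1000 + 500)) * s ^+ 7 * (1 - s) ^+ 3 + ((((((((14 *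 1000 + 982) * 1000 + 778) * 1000 + 496) * 1000 + 720) * 1000 + 728) * 1000 + 404) * 1000 + 427) / ((((((((19 * 1000 + 470) * 1000 + 59) * 1000 + 829) * 1000 + 711) * 1000 + 914) * 1000 + 62) * 1000 + 500) * 1000)) * s ^+ 8 * (1 - s) ^+ 2 + ((((((((13 * 1000 + 150) * 1000 + 8) * 1000 + 158) * 1000 + 925) * 1000 + 690) * 1000 + 91) * 1000 + 873) / ((((((((81 * 1000 + 125) * 1000 + 249) * 1000 + 290) * 1000 + 466) * 1000 + 308) * 1000 + 593) * 1000 + 750) * 1000)) * s ^+ 9 * (1 - s) ^+ 1 + (((((((((8 * 1000 + 575) * 1000 + 159) * 1000 + 345) * 1000 + 383) * 1000 + 445) * 1000 + 670) * 1000 + 8) * 1000 + 43) / (((((((((547 * 1000 + 595) * 1000 + 432) * 1000 + 710) * 1000 + 647) * 1000 + 583) * 1000 + 7) * 1000 + 812) * 1000 + 500) * 1000)) * s ^+ 10 * (1 - s) ^+ 0.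
Lemma idL (y : R) : Nf (2 - 2 * Pu y) - (y - y^+5/(32*27*35)) * Df (2 - 2 * Pu y) = y^+5 * QL (y * 25/256).
Proof. rewrite /Nf /Df /Pu /Pl /QL. by field. Qed.
Lemma idU (y : R) : (y + y^+5/(32*27*35)) * Df (2 - 2 * Pl y) - Nf (2 - 2 * Pl y) = y^+5 * QU (y * 25/256).
Proof. rewrite /Nf /Df /Pl /QU. by field. Qed.

Lemma alg_id (m l y K : R) :
  Df l * (Nf m - (y - K) * Df m) = (m - l) * G m l + Df m * (Nf l - (y - K) * Df l).
Proof. rewrite /Nf /Df /G. ring. Qed.




Lemma QL_ge0 (s : R) : 0 <= s -> s <= 1 -> 0 <= QL s.
Proof. move=> s0 s1; rewrite /QL; nneg. Qed.
Lemma QU_ge0 (s : R) : 0 <= s -> s <= 1 -> 0 <= QU s.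
Proof. move=> s0 s1; rewrite /QU; nneg. Qed.

Lemma Df_gt0 (x : R) : -1/100 <= x -> x <= 401/100 -> 0 < Df x.
Proof. move=> h1 h2; rewrite /Df; have := sqr_ge0 x; lra. Qed.

Lemma G_gt0a (m l : R) : 0 <= m -> m <= 4 -> -1/100 <= l -> l <= m -> 0 < G m l.
Proof.
move=> h1 h2 h3 h4; have := mulr_ge0 h1 (_ : 0 <= l + 1/100); rewrite /G.
have : 0 <= l + 1/100 by lra.
move=> q /(_ q) q2; lra.
Qed.

Lemma G_gt0b (m l : R) : 0 <= l -> l <= m -> m <= 401/100 -> 0 < G m l.
Proof.
move=> h1 h2 h3; have := mulr_ge0 (_ : 0 <= m) h1; rewrite /G.
have : 0 <= m by lra.
move=> q /(_ q) q2; lra.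
Qed.

Lemma core_abs (y K m ml mu QLv QUv : R) :
  0 <= m -> m <= 4 -> -1/100 <= ml -> ml < m -> m < mu -> mu <= 401/100 ->
  0 <= QLv -> 0 <= QUv ->
  Nf ml - (y - K) * Df ml = QLv -> (y + K) * Df mu - Nf mu = QUv ->
  0 < Df m /\ `|Nf m - y * Df m| < K * Df m.
Proof.
move=> m0 m4 ml1 ml2 mu1 mu2 QL0 QU0 eL eU.
have Dm : 0 < Df m by apply: Df_gt0; lra.
have Dml : 0 < Df ml by apply: Df_gt0; lra.
have Dmu : 0 < Df mu by apply: Df_gt0; lra.
have GL : 0 < G m ml by apply: G_gt0a; lra.
have GU : 0 < G mu m by apply: G_gt0b; lra.
have A : 0 < Nf m - (y - K) * Df m.
  rewrite -(pmulr_rgt0 _ Dml).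
  have -> : Df ml * (Nf m - (y - K) * Df m) = (m - ml) * G m ml + Df m * QLv.
    by rewrite -eL /Nf /Df /G; ring.
  apply: ltr_pwDl; first by apply: mulr_gt0; lra.
  exact: mulr_ge0 (ltW Dm) QL0.
have B : Nf m - (y + K) * Df m < 0.
  rewrite -(pmulr_rlt0 _ Dmu).
  have -> : Df mu * (Nf m - (y + K) * Df m) = - (Df m * QUv) - (mu - m) * G mu m.
    by rewrite -eU /Nf /Df /G; ring.
  have := mulr_ge0 (ltW Dm) QU0.
  have : 0 < (mu - m) * G mu m by apply: mulr_gt0; lra.
  move=> *; lra.
split=> //.
rewrite ltr_norml; apply/andP; split; lra.
Qed.

Lemma delta_bound (y : R) : 0 < y -> y <= 256/25 ->
  0 < y^+6/((479*1000+1)*1000+600) /\ y^+6/((479*1000+1)*1000+600) <= 1/250.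
Proof.
move=> y0 yT.
have y6 : y^+6 <= 11^+6 by apply: lerXn2r; rewrite ?nnegrE; lra.
have e11 : (11:R)^+6 = (1*1000+771)*1000+561 by ring.
split; first by apply: divr_gt0; [exact: exprn_gt0 | pos].
rewrite ler_pdivrMr; last by pos.
rewrite e11 in y6; lra.
Qed.

Lemma core (y c : R) : 0 < y -> y <= 256/25 -> -1 <= c -> c <= 1 -> Pl y < c -> c < Pu y ->
  0 < Df (2 - 2*c) /\ `|Nf (2 - 2*c) - y * Df (2 - 2*c)| < y^+5/(32*27*35) * Df (2 - 2*c).
Proof.
move=> y0 yT c1 c2 hl hu.
have [d0 d1] := @delta_bound y y0 yT.
have hd : Pu y = Pl y + y^+6/((479*1000+1)*1000+600) by [].
have s0 : 0 <= y * 25/256 by lra.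
have s1 : y * 25/256 <= 1 by lra.
have y5 : 0 < y^+5 by exact: exprn_gt0.
apply: (@core_abs y (y^+5/(32*27*35)) (2 - 2*c) (2 - 2 * Pu y) (2 - 2 * Pl y)
   (y^+5 * QL (y * 25/256)) (y^+5 * QU (y * 25/256))); try lra.
- by apply: mulr_ge0; [lra | exact: QL_ge0].
- by apply: mulr_ge0; [lra | exact: QU_ge0].
- exact: idL.
- exact: idU.
Qed.
End S.
Arguments Nf {R} m. Arguments Df {R} m. Arguments G {R} m l. Arguments QL {R} s. Arguments QU {R} s.

Section LA.
Variable R : realType.

Lemma sum_delta n (F : nat -> R) m :
  \sum_(i < n) (if (i:nat) == m then F i else 0) = if (m < n)%N then F m else 0.
Proof.
elim: n => [|n IH]; first by rewrite big_ord0.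
rewrite big_ord_recr /= IH.
case: (ltngtP m n) => [h|h|->].
- by rewrite ltnS (ltnW h) addr0.
- by rewrite ltnS leqNgt h addr0.
- by rewrite ltnSn add0r.
Qed.

Lemma tri_entry (a b : nat) (x d o : R) :
  x * (if a == b then d else if (a.+1 == b) || (b.+1 == a) then o else 0)
  = (if a == b then d * x else 0) + (if a == b.+1 then o * x else 0)
    + (if a == b.-1 then (if (0 < b)%N then o * x else 0) else 0).
Proof.
case: (a =P b) => h1; case: (a.+1 =P b) => h2; case: (b.+1 =P a) => h3;
case: (a =P b.+1) => h4; case: (a =P b.-1) => h5; case: (ltnP 0 b) => h6 /=;
  rewrite ?addr0 ?add0r ?mulr0; try (exfalso; lia); try ring.
Qed.

Lemma tri_eig n (o d cc : R) (V : nat -> R) :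
  V 0 = 0 -> V n.+1 = 0 -> (forall k, V k + V k.+2 = cc * V k.+1) ->
  (\row_(k < n) V k.+1) *m tridiag n o d = (d + o * cc) *: \row_(k < n) V k.+1.
Proof.
move=> V0 Vn VS; apply/rowP => k; rewrite !mxE.
under eq_bigr do rewrite !mxE -val_eqE /= tri_entry.
rewrite !big_split /= (sum_delta _ (fun i => d * V i.+1)) (sum_delta _ (fun i => o * V i.+1))
  (sum_delta _ (fun i => if (0 < k)%N then o * V i.+1 else 0)) /= ltn_ord.
have E1 : (if (k.+1 < n)%N then o * V k.+2 else 0) = o * V k.+2.
  case: ifP => // /negbT; rewrite -leqNgt => h.
  have -> : k.+2 = n.+1 by have := ltn_ord k; lia.
  by rewrite Vn mulr0.
have E2 : (if (k.-1 < n)%N then (if (0 < k)%N then o * V (k.-1).+1 else 0) else 0) = o * V k.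
  case: (posnP k) => [->|h]; first by rewrite /= V0 mulr0; case: ifP.
  rewrite prednK //.
  by rewrite (ltnW (ltn_ord k)).
rewrite E1 E2.
rewrite mulrDl -mulrA -(VS k); ring.
Qed.

Lemma tri_tr n (o d : R) : (tridiag n o d)^T = tridiag n o d.
Proof. by apply/matrixP => i j; rewrite !mxE [j == i]eq_sym orbC. Qed.

Lemma tri_sym n (o d : R) i j : tridiag n o d i j = tridiag n o d j i.
Proof. by rewrite !mxE [j == i]eq_sym orbC. Qed.

Lemma jumpE n (h : R) (k m : 'I_n) : jump h k.+1 m.+1 = h^-1 * tridiag n (-1) 2 k m.
Proof.
rewrite mxE /jump /dphi -val_eqE /= !eqSS.
case: ((m:nat) =P k) => h1; case: ((m:nat) =P k.+1) => h2; case: (m.+1 =P k) => h3;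
case: ((k:nat) =P m) => h4; case: (k.+1 =P m) => h5 /=;
  rewrite ?addr0 ?add0r ?mulr0; try (exfalso; lia); try ring.
Qed.

Lemma Smat_eq n (h : R) : h != 0 ->
  Smat n h = h^-1 *: (tridiag n (-1) 2 *m tridiag n (-1) 2).
Proof.
move=> h0; apply/matrixP => i j; rewrite /Smat [in LHS]mxE [in RHS]mxE [in RHS]mxE big_distrr /=.
apply: eq_bigr => m _; rewrite !jumpE.
rewrite [tridiag n (-1) 2 m j]tri_sym.
by field.
Qed.

Lemma Sgmat_eq n (h : R) : Sgmat n h = h^+2 *: Smat n h.
Proof.
apply/matrixP => i j; rewrite !mxE big_distrr /=.
by apply: eq_bigr => m _; ring.
Qed.
End LA.

Section LA2.
Variable R : realType.

Definition th (n p : nat) : R := (p.+1)%:R * pi * (n.+1)%:R^-1.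
Definition Vf (n p m : nat) : R := sin (m%:R * th n p).
Definition vrow (n p : nat) : 'rV[R]_n := \row_(k < n) Vf n p k.+1.

Lemma sin_npi k : sin (k%:R * pi) = 0 :> R.
Proof.
elim: k => [|k IH]; first by rewrite mul0r sin0.
by rewrite -natr1 mulrDl mul1r sinDpi IH oppr0.
Qed.

Lemma Vf0 n p : Vf n p 0 = 0.
Proof. by rewrite /Vf mul0r sin0. Qed.

Lemma VfN n p : Vf n p n.+1 = 0.
Proof.
rewrite /Vf /th.
have -> : n.+1%:R * ((p.+1)%:R * pi * (n.+1)%:R^-1) = (p.+1)%:R * pi :> R.
  by field; rewrite nat1r pnatr_eq0.
exact: sin_npi.
Qed.

Lemma VfS n p k : Vf n p k + Vf n p k.+2 = (2 * cos (th n p)) * Vf n p k.+1.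
Proof.
rewrite /Vf.
set t := th n p.
have -> : k%:R * t = k.+1%:R * t - t by rewrite mulrS; ring.
have -> : k.+2%:R * t = k.+1%:R * t + t by rewrite mulrS; ring.
rewrite sinB sinD; ring.
Qed.

Lemma eigT n p (o d : R) :
  vrow n p *m tridiag n o d = (d + o * (2 * cos (th n p))) *: vrow n p.
Proof. apply: tri_eig; [exact: Vf0 | exact: VfN | move=> k; exact: VfS]. Qed.

Lemma eigD n (v : 'rV[R]_n) M1 M2 a1 a2 :
  v *m M1 = a1 *: v -> v *m M2 = a2 *: v -> v *m (M1 + M2) = (a1 + a2) *: v.
Proof. by move=> h1 h2; rewrite mulmxDr h1 h2 scalerDl. Qed.

Lemma eigB n (v : 'rV[R]_n) M1 M2 a1 a2 :
  v *m M1 = a1 *: v -> v *m M2 = a2 *: v -> v *m (M1 - M2) = (a1 - a2) *: v.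
Proof. by move=> h1 h2; rewrite mulmxBr h1 h2 scalerBl. Qed.

Lemma eigZ n (v : 'rV[R]_n) M1 a1 s :
  v *m M1 = a1 *: v -> v *m (s *: M1) = (s * a1) *: v.
Proof. by move=> h1; rewrite -scalemxAr h1 scalerA. Qed.

Lemma eig1 n (v : 'rV[R]_n) : v *m 1%:M = 1 *: v.
Proof. by rewrite mulmx1 scale1r. Qed.

Arguments eigD {n v M1 M2 a1 a2}.
Arguments eigB {n v M1 M2 a1 a2}.
Arguments eigZ {n v M1 a1} s.
Arguments eig1 {n} v.

Lemma eigTT n p (o d : R) :
  vrow n p *m (tridiag n o d *m tridiag n o d) = (d + o * (2 * cos (th n p)))^+2 *: vrow n p.
Proof. by rewrite mulmxA eigT -scalemxAl eigT scalerA expr2. Qed.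

Definition mu (n p : nat) : R := 2 - 2 * cos (th n p).

Lemma eigA n p :
  vrow n p *m gsq_A n (n.+1)%:R^-1 (31/252) = ((n.+1)%:R * Nf (mu n p)) *: vrow n p.
Proof.
have h0 : (n.+1)%:R^-1 != 0 :> R by rewrite invr_eq0 pnatr_eq0.
rewrite /gsq_A; set h := (n.+1)%:R^-1.
have := eigB (eigZ h^-1 (eigT n p (-1) 2)) (eigZ (31/252) (eigZ h^-1 (eigTT n p (-1) 2))).
rewrite /Kmat (Smat_eq R n h h0) => ->.
congr (_ *: _); rewrite /Nf /mu /h invrK; ring.
Qed.

Lemma eigB' n p :
  vrow n p *m gsq_B n (n.+1)%:R^-1 (23 / (4 * 27 * 35)) (26 / 21)
   = ((n.+1)%:R^-1 * Df (mu n p)) *: vrow n p.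
Proof.
have h0 : (n.+1)%:R^-1 != 0 :> R by rewrite invr_eq0 pnatr_eq0.
rewrite /gsq_B; set h := (n.+1)%:R^-1.
have := eigD (eigD (eigZ (26/21) (eigZ h (eigT n p (1/6) (2/3))))
                   (eigZ (1 - 26/21) (eigZ h (eig1 (vrow n p)))))
             (eigZ (23 / (4 * 27 * 35)) (eigZ (h^+2) (eigZ h^-1 (eigTT n p (-1) 2)))).
rewrite /MGmat /MLmat Sgmat_eq (Smat_eq R n h h0) => ->.
congr (_ *: _); rewrite /Df /mu /h; by field; rewrite nat1r pnatr_eq0.
Qed.
End LA2.

Arguments eigD {R n v M1 M2 a1 a2}.
Arguments eigB {R n v M1 M2 a1 a2}.
Arguments eigZ {R n v M1 a1} s.
Arguments eig1 {R n} v.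
Section LA3.
Variable R : realType.

Definition Wm n : 'M[R]_n := \matrix_(p < n, k < n) Vf R n p k.+1.

Lemma rowW n (p : 'I_n) : row p (Wm n) = vrow R n p.
Proof. by apply/rowP => k; rewrite !mxE. Qed.

Lemma mx_eig n (W M : 'M[R]_n) (s : 'I_n -> R) :
  (forall p, row p W *m M = s p *: row p W) -> W *m M = diag_mx (\row_p s p) *m W.
Proof.
move=> H; apply/row_matrixP => p; rewrite row_mul H mul_diag_mx.
by apply/rowP => k; rewrite !mxE.
Qed.

Lemma det_eig n (W M : 'M[R]_n) (s : 'I_n -> R) : \det W != 0 ->
  W *m M = diag_mx (\row_p s p) *m W -> \det M = \prod_p s p.
Proof.
move=> W0 /(congr1 determinant); rewrite !det_mulmx det_diag.
under eq_bigr do rewrite mxE.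
by rewrite [\det W * _]mulrC => /(mulIf W0).
Qed.

Lemma th_gt0 n p : 0 < th R n p.
Proof. by rewrite /th mulr_gt0 ?invr_gt0 ?ltr0n // mulr_gt0 ?ltr0n // pi_gt0. Qed.

Lemma th_ltpi n p : (p < n)%N -> th R n p < pi.
Proof.
move=> pn; rewrite /th ltr_pdivrMr ?ltr0n // mulrC ltr_pM2l ?pi_gt0 //.
by rewrite ltr_nat.
Qed.

Lemma th_in n p : (p < n)%N -> th R n p \in `[0, pi].
Proof.
move=> pn; rewrite in_itv /=; apply/andP; split; apply: ltW;
  [exact: th_gt0 | exact: th_ltpi].
Qed.

Lemma th_lt n p q : (p < q)%N -> th R n p < th R n q.
Proof.
move=> pq; rewrite /th ltr_pM2r ?invr_gt0 ?ltr0n // ltr_pM2r ?pi_gt0 //.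
by rewrite ltr_nat ltnS.
Qed.

Lemma cos_th_lt n p q : (p < q)%N -> (q < n)%N -> cos (th R n q) < cos (th R n p).
Proof.
move=> pq qn.
have hp : th R n p \in `[0, pi] := @th_in n p (ltn_trans pq qn).
have hq : th R n q \in `[0, pi] := @th_in n q qn.
by rewrite (ltr_cos hp hq) th_lt.
Qed.

Lemma cos_th_neq n (p q : 'I_n) : p != q -> cos (th R n p) != cos (th R n q).
Proof.
move=> pq; case: (ltngtP p q) => h.
- by rewrite gt_eqF // cos_th_lt.
- by rewrite lt_eqF // cos_th_lt.
- by move: pq; rewrite (val_inj h) eqxx.
Qed.

Lemma orth n (p q : 'I_n) : p != q -> \sum_(k < n) Vf R n p k.+1 * Vf R n q k.+1 = 0.
Proof.
move=> pq.
have e1 := eigT R n p 1 0.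
have e2 := eigT R n q 1 0.
have : (vrow R n p *m tridiag n 1 0) *m (vrow R n q)^T = vrow R n p *m (tridiag n 1 0 *m (vrow R n q)^T).
  by rewrite mulmxA.
have -> : tridiag n 1 0 *m (vrow R n q)^T = (vrow R n q *m tridiag n 1 0)^T.
  by rewrite trmx_mul tri_tr.
rewrite e1 e2 -scalemxAl linearZ /= -scalemxAr => /eqP.
rewrite -subr_eq0 -scalerBl scalemx_eq0 => /orP [h|/eqP hD].
  exfalso; move: h; rewrite !add0r !mul1r subr_eq0 => /eqP h.
  have : cos (th R n p) = cos (th R n q) by lra.
  by apply/eqP; exact: cos_th_neq.
transitivity ((vrow R n p *m (vrow R n q)^T) 0 0); last by rewrite hD mxE.
rewrite !mxE; apply: eq_bigr => k _; by rewrite !mxE.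
Qed.

Lemma WWt n : Wm n *m (Wm n)^T = diag_mx (\row_(p < n) \sum_(k < n) Vf R n p k.+1 ^+ 2).
Proof.
apply/matrixP => p q; rewrite !mxE.
case: (eqVneq p q) => [<-|pq] /=.
  by rewrite mulr1n; apply: eq_bigr => k _; rewrite !mxE expr2.
rewrite mulr0n; apply: (etrans _ (@orth n p q pq)); apply: eq_bigr => k _; by rewrite !mxE.
Qed.

Lemma w_gt0 n (p : 'I_n) : 0 < \sum_(k < n) Vf R n p k.+1 ^+ 2.
Proof.
have n0 : (0 < n)%N by exact: (leq_ltn_trans (leq0n p) (ltn_ord p)).
rewrite (bigD1 (Ordinal n0)) //=.
have a0 : 0 < Vf R n p 1 ^+ 2.
  rewrite exprn_gt0 // /Vf mul1r; apply: sin_gt0_pi.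
  by rewrite th_gt0 th_ltpi.
have : 0 <= \sum_(i < n | i != Ordinal n0) Vf R n p i.+1 ^+ 2.
  by apply: sumr_ge0 => i _; exact: sqr_ge0.
lra.
Qed.

Lemma detW n : \det (Wm n) != 0.
Proof.
have := congr1 determinant (WWt n); rewrite det_mulmx det_tr det_diag => e.
apply/eqP => h0; rewrite h0 mul0r in e.
have : 0 < \prod_(i < n) (\row_(p < n) \sum_(k < n) Vf R n p k.+1 ^+ 2) 0 i.
  by apply: prodr_gt0 => i _; rewrite mxE; exact: w_gt0.
by rewrite -e ltxx.
Qed.
End LA3.

Section LA4.
Variable R : realType.

Lemma prod_eq_sorted n (l1 l2 : 'I_n -> R) :
  (forall i j : 'I_n, (i <= j)%N -> l1 i <= l1 j) ->
  (forall i j : 'I_n, (i <= j)%N -> l2 i <= l2 j) ->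
  (forall x, \prod_i (l1 i - x) = \prod_i (l2 i - x)) -> forall i, l1 i = l2 i.
Proof.
move=> s1 s2 e.
pose P (l : 'I_n -> R) := \prod_(x <- map l (enum 'I_n)) ('X - x%:P).
have hP l x : (P l).[x] = (-1)^+n * \prod_i (l i - x).
  rewrite /P horner_prod big_map big_enum /=.
  under eq_bigr do rewrite hornerXsubC -opprB.
  by rewrite prodrN card_ord.
have PE : P l1 = P l2.
  apply/eqP; rewrite -subr_eq0; apply/eqP.
  apply: (@roots_geq_poly_eq0 _ _ [seq k%:R | k <- iota 0 (size (P l1 - P l2))]).
  - by apply/allP => x _; rewrite /root hornerD hornerN !hP e subrr.
  - rewrite map_inj_uniq ?iota_uniq // => a b /eqP; rewrite eqr_nat => /eqP //.
  - by rewrite size_map size_iota.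
have pe := prod_XsubC_eq PE.
have ss (l : 'I_n -> R) : (forall i j : 'I_n, (i <= j)%N -> l i <= l j) ->
    sorted <=%R (map l (enum 'I_n)).
  move=> hl; rewrite sorted_map.
  have : sorted (relpre val leq) (enum 'I_n) by rewrite -sorted_map val_enum_ord iota_sorted.
  by apply: sub_sorted => a b; exact: hl.
have eqs := sorted_eq (@le_trans _ R) (@le_anti _ R) (ss l1 s1) (ss l2 s2) pe.
move=> i; have := congr1 (fun s => nth 0 s i) eqs.
by rewrite !(nth_map i) -?enumT ?nth_ord_enum ?size_enum_ord. Qed.
End LA4.


Section FIN.
Variable R : realType.

Lemma f_mono (x y : R) : 0 <= x -> x < y -> y <= 4 -> Nf x / Df x < Nf y / Df y.
Proof.
move=> x0 xy y4.
have Dx : 0 < Df x by apply: Df_gt0; lra.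
have Dy : 0 < Df y by apply: Df_gt0; lra.
have Gp : 0 < G y x by apply: G_gt0a; lra.
rewrite ltr_pdivrMr // mulrAC ltr_pdivlMr //.
have e : Nf y * Df x - Nf x * Df y = (y - x) * G y x by rewrite /Nf /Df /G; ring.
have : 0 < (y - x) * G y x by apply: mulr_gt0; lra.
lra.
Qed.

Lemma mu_bnd n p : 0 <= mu R n p <= 4.
Proof. rewrite /mu; have := cos_geN1 (th R n p); have := cos_le1 (th R n p). move=> *; apply/andP; split; lra. Qed.

Definition lamv n (p : nat) : R := ((n.+1)%:R * Nf (mu R n p)) / ((n.+1)%:R^-1 * Df (mu R n p)).

Lemma Dmu_gt0 n p : 0 < Df (mu R n p).
Proof. have /andP[h1 h2] := mu_bnd n p; apply: Df_gt0; lra. Qed.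

Lemma lamvE n p : lamv n p = (n.+1)%:R ^+ 2 * (Nf (mu R n p) / Df (mu R n p)).
Proof.
have D0 := Dmu_gt0 n p.
rewrite /lamv; field; by rewrite ?(lt0r_neq0 D0) ?nat1r ?pnatr_eq0.
Qed.

Lemma lamv_mono n (p q : 'I_n) : (p <= q)%N -> lamv n p <= lamv n q.
Proof.
rewrite leq_eqVlt => /orP [/eqP -> //|pq].
apply: ltW; rewrite !lamvE ltr_pM2l ?exprn_gt0 ?ltr0n //.
have /andP[h1 _] := mu_bnd n p.
have /andP[_ h2] := mu_bnd n q.
apply: f_mono => //.
rewrite /mu; have := @cos_th_lt R n p q pq (ltn_ord q); lra.
Qed.

Lemma detAB n (x : R) :
  \det (gsq_A n (n.+1)%:R^-1 (31/252) - x *: gsq_B n (n.+1)%:R^-1 (23 / (4 * 27 * 35)) (26 / 21))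
  = \prod_(p < n) ((n.+1)%:R * Nf (mu R n p) - x * ((n.+1)%:R^-1 * Df (mu R n p))).
Proof.
apply: (@det_eig R n (Wm R n) _ _ (detW R n)); apply: mx_eig => p; rewrite rowW.
by apply: eigB; [exact: eigA | apply: eigZ; exact: eigB'].
Qed.

Lemma detB n :
  \det (gsq_B n (n.+1)%:R^-1 (23 / (4 * 27 * 35)) (26 / 21))
  = \prod_(p < n) ((n.+1)%:R^-1 * Df (mu R n p)).
Proof.
apply: (@det_eig R n (Wm R n) _ _ (detW R n)); apply: mx_eig => p; rewrite rowW.
exact: eigB'.
Qed.

Lemma factor n (x : R) :
  \prod_(p < n) ((n.+1)%:R * Nf (mu R n p) - x * ((n.+1)%:R^-1 * Df (mu R n p)))
  = \prod_(p < n) ((n.+1)%:R^-1 * Df (mu R n p)) * \prod_(p < n) (lamv n p - x).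
Proof.
rewrite -big_split /=; apply: eq_bigr => p _.
have D0 := Dmu_gt0 n p.
rewrite /lamv; field; by rewrite ?(lt0r_neq0 D0) ?nat1r ?pnatr_eq0.
Qed.

Lemma prodB_neq0 n : \prod_(p < n) ((n.+1)%:R^-1 * Df (mu R n p)) != 0.
Proof.
apply: lt0r_neq0; apply: prodr_gt0 => p _; apply: mulr_gt0; last exact: Dmu_gt0.
by rewrite invr_gt0 ltr0n.
Qed.

Lemma bound n (j : 'I_n) :
  `|lamv n j - ((j.+1)%:R * pi) ^+ 2| / ((j.+1)%:R * pi) ^+ 2
    < ((j.+1)%:R * pi * (n.+1)%:R^-1) ^+ 8 / (32 * 27 * 35).
Proof.
set t := (j.+1)%:R * pi * (n.+1)%:R^-1.
have t0 : 0 < t by exact: (@th_gt0 R n j).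
have tpi : t < pi by exact: (@th_ltpi R n j (ltn_ord j)).
have pl := pi_lt R.
have t2 : t ^+ 2 < 30 by rewrite expr2; nra.
have yT : t ^+ 2 <= 256/25 by rewrite expr2; nra.
have y0 : 0 < t ^+ 2 by exact: exprn_gt0.
have [D0 hc] := @core R (t ^+ 2) (cos t) y0 yT (cos_geN1 t) (cos_le1 t) (@cos_lb R t t0 t2) (@cos_ub R t t0 t2).
set D := Df (2 - 2 * cos t) in D0 hc *.
set X := Nf (2 - 2 * cos t) in hc *.
set N := (n.+1)%:R : R.
have N0 : 0 < N by rewrite ltr0n.
have eJ : ((j.+1)%:R * pi) ^+ 2 = N ^+ 2 * t ^+ 2 by rewrite /t /N; field; rewrite nat1r pnatr_eq0.
have eV : lamv n j = N ^+ 2 * (X / D) by rewrite lamvE.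
rewrite eJ eV.
have -> : N ^+ 2 * (X / D) - N ^+ 2 * t ^+ 2 = N ^+ 2 / D * (X - t ^+ 2 * D).
  by field; exact: lt0r_neq0.
rewrite normrM (ger0_norm (_ : 0 <= N ^+ 2 / D)); last by apply: divr_ge0; [exact: sqr_ge0 | exact: ltW].
rewrite ltr_pdivrMr; last by apply: mulr_gt0; exact: exprn_gt0.
have H2 : N ^+ 2 / D * `|X - t ^+ 2 * D| < N ^+ 2 / D * ((t ^+ 2) ^+ 5 / (32 * 27 * 35) * D).
  by rewrite ltr_pM2l // divr_gt0 // exprn_gt0.
have -> : t ^+ 8 / (32 * 27 * 35) * (N ^+ 2 * t ^+ 2) = N ^+ 2 / D * ((t ^+ 2) ^+ 5 / (32 * 27 * 35) * D).
  by field; exact: lt0r_neq0.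
exact: H2.
Qed.
End FIN.

Theorem theorem3 (R : realType) (N : nat) (HN : (2 <= N)%N) :
  let h : R := N%:R^-1 in
  let A := gsq_A N.-1 h (31 / 252) in
  let B := gsq_B N.-1 h (23 / (4 * 27 * 35)) (26 / 21) in
  (exists lam : 'I_N.-1 -> R, gen_eigs A B lam) /\
  (forall lam : 'I_N.-1 -> R, gen_eigs A B lam ->
     forall j : 'I_N.-1,
       let lamj : R := ((j.+1)%:R * pi) ^+ 2 in
       `|lam j - lamj| / lamj < ((j.+1)%:R * pi * h) ^+ 8 / (32 * 27 * 35)).
Proof.
move: HN; case: N => [//|n] HN /=.
split.
  exists (lamv R n); split.
    by move=> i j ij; exact: lamv_mono.
  by move=> x; rewrite detAB detB factor.
move=> lam [ls ld] j.
have e : forall i, lam i = lamv R n i.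
  apply: (@prod_eq_sorted R n lam (lamv R n) ls).
    by move=> a b ab; exact: lamv_mono.
  move=> x; apply: (mulfI (prodB_neq0 R n)).
  by rewrite -detB -ld detAB factor detB.
rewrite e; exact: bound.
Qed.
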